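(* Assume the characteristic of $K$ is good for $R$, and assume either that all branches of $R$ are singular, or that the branches of $R$ have pairwise different tangent directions. Let $A\in\mathcal A_K$ and let $(\varphi_A,\overline\sigma,\sigma)$ and $(\varphi_A,\overline\sigma',\sigma')$ be two equimultiple deformations with sections of the parametrization over $A$ with the same underlying morphism $\varphi_A:P_A\to\overline R_A$. Then $\sigma=\sigma'$ and $\overline\sigma=\overline\sigma'$; that is, the forgetful functor from equimultiple deformations with sections of the parametrization to deformations of the parametrization without sections is injective on objects.
   Context: $K$ is an algebraically closed field of characteristic $p\ge0$; $\mathcal A_K$ is the category of Noetherian complete local $K$-algebras with residue field $K$. $P=K[[x,y]]$, $f\in P$ reduced non-unit with irreducible factorization $f=f_1\cdots f_r$, $R=P/\langle f\rangle$ with branches $R_i=P/\langle f_i\rangle$. The normalization is $\overline R=\bigoplus_{i=1}^rK[[t_i]]$, with parametrization $\varphi=(\varphi_i):P\to\overline R$, $\varphi_i(x)=x_i(t_i)$, $\varphi_i(y)=y_i(t_i)$; $m_i=\ord\varphi_i=\min\{\ord_{t_i}x_i,\ord_{t_i}y_i\}$ is the multiplicity of the branch $R_i$. The characteristic is good for $R$ if $p=0$ or $p\nmid m_i$ for all $i$. A deformation with sections of the parametrization over $A\in\mathcal A_K$ consists of $A$-flat complete local algebras $P_A$, $\overline R_A=\bigoplus_i\overline R_{A,i}$, an $A$-algebra map $\varphi_A:P_A\to\overline R_A$ reducing to $\varphi$ modulo $\mathfrak m_A$ (Cartesian squares), and sections $\sigma:P_A\to A$, $\overline\sigma_i:\overline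 R_{A,i}\to A$ of the structure maps. It is equimultiple if $\varphi_{A,i}(\ker\sigma)\subset(\ker\overline\sigma_i)^{m_i}$ for all $i$. *)

(* Defs.v *)
From HB Require Import structures.
From mathcomp Require Import all_boot all_order all_algebra.
Set Implicit Arguments. Unset Strict Implicit. Unset Printing Implicit Defensive.
Import Order.TTheory GRing.Theory.
Local Open Scope ring_scope.

Section PS.
Variable R : nzRingType.
Definition ps1 : nat -> R := fun n => if n == 0%N then 1 else 0.
Definition psmul (F G : nat -> R) : nat -> R :=
  fun n => \sum_(j < n.+1) F j * G (n - j)%N.
Fixpoint pspow (F : nat -> R) (k : nat) : nat -> R :=
  match k with 0%N => ps1 | k'.+1 => psmul F (pspow F k') end.
Definition pssubC (F : nat -> R) (a : R) : nat -> R :=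
  fun n => F n - (if n == 0%N then a else 0).
End PS.

(* ---------- Bivariate formal power series  K[[x,y]] :  g i j = coeff of x^i y^j *)
Section BPS.
Variable K : fieldType.
Definition bps := nat -> nat -> K.
Definition bmul (f g : bps) : bps :=
  fun i j => \sum_(a < i.+1) \sum_(b < j.+1) f a b * g (i - a)%N (j - b)%N.
Definition bone : bps := fun i j => if (i == 0%N) && (j == 0%N) then 1 else 0.
Definition bprod (fs : seq bps) : bps := foldr bmul bone fs.
Definition beq (f g : bps) := forall i j, f i j = g i j.
Definition bunit (f : bps) := f 0%N 0%N != 0.
Definition bdvd (f g : bps) := exists h, beq g (bmul f h).
Definition birreducible (f : bps) :=
  f 0%N 0%N = 0 /\ (exists i j, f i j != 0) /\
  forall u v, beq f (bmul u v) -> bunit u \/ bunit v.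
(* reduced = squarefree (K[[x,y]] is a UFD); also excludes f = 0 *)
Definition breduced (f : bps) :=
  forall g, g 0%N 0%N = 0 -> ~ bdvd (bmul g g) f.
(* substitution  g(x(t), y(t))  for x(0) = y(0) = 0 (finite sums coefficientwise) *)
Definition bsubst (g : bps) (x y : nat -> K) : nat -> K :=
  fun n => \sum_(i < n.+1) \sum_(j < n.+1)
             g i j * psmul (pspow x i) (pspow y j) n.
End BPS.

Section Curve.
Variables (K : fieldType) (r : nat).

(* f is a reduced non-unit with irreducible factorization f = f_1 ... f_r,
   and phi_i : x |-> x_i(t), y |-> y_i(t) is the normalization of R_i = P/<f_i>:
   phi_i is local, ker phi_i = <f_i>, and K[[t]] lies in the fraction field of
   the image (K[[t]] being automatically integral over the image). *)
Definition param_of_curve (f : bps K) (fi : 'I_r -> bps K)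
  (x y : 'I_r -> nat -> K) :=
  [/\ f 0%N 0%N = 0, breduced f,
      (forall i, birreducible (fi i)),
      beq f (bprod [seq fi i | i <- enum 'I_r]) &
      forall i,
      [/\ x i 0%N = 0, y i 0%N = 0,
          (forall g, (forall n, bsubst g (x i) (y i) n = 0) <-> bdvd (fi i) g) &
          forall h : nat -> K, exists g1 g2 : bps K,
            (exists n, bsubst g2 (x i) (y i) n != 0) /\
            forall n, psmul (bsubst g2 (x i) (y i)) h n = bsubst g1 (x i) (y i) n]].

(* e = ord phi_i = min(ord x_i, ord y_i), the multiplicity of the branch *)
Definition is_mult (x y : nat -> K) (e : nat) :=
  (forall n, (n < e)%N -> x n = 0 /\ y n = 0) /\ (x e != 0 \/ y e != 0).

Definition good_char (mlt : 'I_r -> nat) :=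
  forall i p, p \in [pchar K] -> ~~ (p %| mlt i)%N.

(* tangent direction of branch i is [x_i(m_i) : y_i(m_i)] in P^1 *)
Definition distinct_tangents (x y : 'I_r -> nat -> K) (mlt : 'I_r -> nat) :=
  forall i j, i != j ->
    x i (mlt i) * y j (mlt j) - y i (mlt i) * x j (mlt j) != 0.
End Curve.

Section LocalAlg.
Variables (K : fieldType) (A : comAlgType K).

Definition is_ideal (I : A -> Prop) :=
  [/\ I 0, (forall a b, I a -> I b -> I (a + b)) & (forall s a, I a -> I (s * a))].

Fixpoint ideal_pow (I : A -> Prop) (n : nat) : A -> Prop :=
  match n with
  | 0%N => fun _ => True
  | n'.+1 => fun a => exists s : seq (A * A),
      (forall p, p \in s -> I p.1 /\ ideal_pow I n' p.2) /\
      a = \sum_(p <- s) p.1 * p.2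
  end.

Definition generated_by (s : seq A) (a : A) :=
  exists c : seq A, size c = size s /\ a = \sum_(k < size s) c`_k * s`_k.

(* A is local with maximal ideal mA, residue field K (via k |-> k%:A),
   Noetherian, and mA-adically complete (and separated). *)
Definition complete_local_K_alg (mA : A -> Prop) :=
  [/\ is_ideal mA, ~ mA 1,
      (forall a, ~ mA a -> exists b, a * b = 1),
      (forall a, exists k : K, mA (a - k%:A)) &
      (forall I, is_ideal I -> exists s, forall a, I a <-> generated_by s a)] /\
  (forall a, (forall n, ideal_pow mA n a) -> a = 0) /\
      (forall u : nat -> A,
         (forall n, exists N, forall k, (N <= k)%N -> ideal_pow mA n (u k - u N)) ->
         exists l, forall n, exists N, forall k, (N <= k)%N ->
           ideal_pow mA n (u k - l)).

Definition in_tpow (c : A) (e : nat) (F : nat -> A) :=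
  exists G : nat -> A, forall n,
    F n = \sum_(j < n.+1) (('X - c%:P) ^+ e)`_j * G (n - j)%N.
End LocalAlg.

(* ---------- deformations of the parametrization over A (trivialized model:
   P_A = A[[x,y]], Rbar_{A,i} = A[[t_i]]; phi_A given by x |-> X_i, y |-> Y_i) *)
Section Deformation.
Variables (K : fieldType) (A : comAlgType K) (mA : A -> Prop) (r : nat).

Definition lifts (x y : 'I_r -> nat -> K) (X Y : 'I_r -> nat -> A) :=
  forall i n, mA (X i n - (x i n)%:A) /\ mA (Y i n - (y i n)%:A).

(* sections: sigma : x |-> a, y |-> b ; sigmabar_i : t_i |-> c_i  (all in m_A);
   equimultiple: phi_{A,i}(ker sigma) = phi_{A,i}<x-a, y-b> in <t_i - c_i>^{m_i} *)
Definition equimult_sections (mlt : 'I_r -> nat) (X Y : 'I_r -> nat -> A)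
  (a b : A) (c : 'I_r -> A) :=
  [/\ mA a, mA b, (forall i, mA (c i)) &
      forall i, in_tpow (c i) (mlt i) (pssubC (X i) a) /\
                in_tpow (c i) (mlt i) (pssubC (Y i) b)].
End Deformation.

(* Main.v *)
Require Import Defs.
From HB Require Import structures.
From mathcomp Require Import all_boot all_order all_algebra.
Set Implicit Arguments. Unset Strict Implicit. Unset Printing Implicit Defensive.
Import GRing.Theory.
Local Open Scope ring_scope.

Section Ideals.
Variables (K : fieldType) (A : comAlgType K) (I : A -> Prop).
Hypothesis HI : is_ideal I.

Lemma I0 : I 0. Proof. by case: HI. Qed.
Lemma ID u v : I u -> I v -> I (u + v). Proof. by case: HI => _ H _; apply: H. Qed.
Lemma IMl s u : I u -> I (s * u). Proof. by case: HI => _ _ H; apply: H. Qed.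
Lemma IMr s u : I u -> I (u * s). Proof. by rewrite mulrC; apply: IMl. Qed.
Lemma IN u : I u -> I (- u).
Proof. by move=> Hu; rewrite -mulN1r; apply: IMl. Qed.
Lemma IB u v : I u -> I v -> I (u - v).
Proof. by move=> Hu Hv; apply: ID => //; apply: IN. Qed.
Lemma IZ (k : K) u : I u -> I (k *: u).
Proof. by move=> Hu; rewrite -mulr_algl; apply: IMl. Qed.
Lemma Imn u n : I u -> I (u *+ n).
Proof. by move=> Hu; rewrite -scaler_nat; apply: IZ. Qed.
Lemma Isum (J : Type) (s : seq J) (P : pred J) (F : J -> A) :
  (forall j, P j -> I (F j)) -> I (\sum_(j <- s | P j) F j).
Proof. by move=> H; apply: (big_ind I I0 ID). Qed.
Lemma Isum_seq (J : eqType) (s : seq J) (F : J -> A) :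
  (forall j, j \in s -> I (F j)) -> I (\sum_(j <- s) F j).
Proof. by move=> H; rewrite big_seq; apply: Isum. Qed.
Lemma Iinv (k : K) u : k != 0 -> I (k *: u) -> I u.
Proof. by move=> k0 /(IZ k^-1); rewrite scalerA mulVf // scale1r. Qed.
Lemma Iext' u v : I u -> u = v -> I v. Proof. by move=> ? <-. Qed.
Lemma Iext u v : u = v -> I u -> I v. Proof. by move=> ->. Qed.
End Ideals.

Section Pow.
Variables (K : fieldType) (A : comAlgType K) (mA : A -> Prop).
Hypothesis HmA : is_ideal mA.

Lemma ipow_ideal n : is_ideal (ideal_pow mA n).
Proof.
case: n => [|n]; first by split.
split.
- by exists [::]; split => //; rewrite big_nil.
- move=> u v [s [Hs ->]] [t [Ht ->]]; exists (s ++ t); split; last by rewrite big_cat.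
  by move=> p; rewrite mem_cat => /orP [] ?; [apply: Hs | apply: Ht].
- move=> w u [s [Hs ->]]; exists [seq (w * p.1, p.2) | p <- s]; split.
  + move=> q /mapP [p ps ->] /=; have [H1 H2] := Hs p ps; split => //.
    exact: IMl.
  + by rewrite big_map mulr_sumr; apply: eq_bigr => p _; rewrite mulrA.
Qed.

Lemma ipow_mul n u v : mA u -> ideal_pow mA n v -> ideal_pow mA n.+1 (u * v).
Proof. move=> Hu Hv; exists [:: (u, v)]; split; last by rewrite big_seq1.
by move=> p; rewrite inE => /eqP -> /=. Qed.

Lemma ipow_mulr n u v : ideal_pow mA n u -> mA v -> ideal_pow mA n.+1 (u * v).
Proof. by move=> Hu Hv; rewrite mulrC; apply: ipow_mul. Qed.

Lemma ipow_S n u : ideal_pow mA n.+1 u -> ideal_pow mA n u.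
Proof.
elim: n u => [//|n IH] u [s [Hs ->]].
apply: Isum_seq; first exact: ipow_ideal.
move=> p ps; have [H1 H2] := Hs p ps.
by apply: ipow_mul => //; apply: IH.
Qed.

Lemma ipow_le m n u : (m <= n)%N -> ideal_pow mA n u -> ideal_pow mA m u.
Proof.
move=> /subnK <-; elim: (n - m)%N u => [//|k IH] u H.
by apply: IH; apply: ipow_S; rewrite addSn in H.
Qed.

Lemma ipow1 u : mA u -> ideal_pow mA 1 u.
Proof. by move=> Hu; rewrite -[u]mulr1; apply: ipow_mul. Qed.

Lemma ipow_mA n u : (0 < n)%N -> ideal_pow mA n u -> mA u.
Proof.
move=> n0 /(ipow_le n0) [s [Hs ->]]; apply: Isum_seq => // p ps.
by have [H1 _] := Hs p ps; apply: IMr.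
Qed.
End Pow.

From mathcomp Require Import ring.

Section Coef.
Variables (K : fieldType) (A : comAlgType K) (mA : A -> Prop).
Hypothesis HmA : is_ideal mA.

Lemma sum_if1 N m (v : A) :
  \sum_(j < N) (if (j : nat) == m then v else 0) = if (m < N)%N then v else 0.
Proof.
elim: N => [|N IH]; first by rewrite big_ord0.
rewrite big_ord_recr /= IH ltnS.
by case: (ltngtP m N) => _; rewrite ?addr0 ?add0r.
Qed.

Lemma sum_cong1 (I : A -> Prop) (HI : is_ideal I) N m (F : 'I_N -> A) v :
  (forall j : 'I_N, I (F j - (if (j : nat) == m then v else 0))) ->
  I (\sum_(j < N) F j - (if (m < N)%N then v else 0)).
Proof.
move=> H; rewrite -sum_if1 -sumrB; exact: Isum.
Qed.

Definition Pc (c : A) (e : nat) : {poly A} := ('X - c%:P) ^+ e.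

Lemma Pc_rec c e j : (Pc c e.+1)`_j =
  (if j == 0%N then 0 else (Pc c e)`_j.-1) - c * (Pc c e)`_j.
Proof. by rewrite /Pc exprS mulrBl coefB coefXM coefCM. Qed.

Lemma Pc_mA c e j : mA c -> mA ((Pc c e)`_j - (j == e)%:R).
Proof.
move=> Hc; elim: e j => [|e IH] j.
  by rewrite /Pc expr0 coef1 subrr; apply: I0.
rewrite Pc_rec; case: j => [|j] /=.
  by rewrite sub0r subr0; apply: (IN HmA); apply: (IMr HmA).
have -> : (Pc c e)`_j - c * (Pc c e)`_j.+1 - (j.+1 == e.+1)%:R =
   ((Pc c e)`_j - (j == e)%:R) - c * (Pc c e)`_j.+1 by rewrite eqSS; ring.
by apply: (IB HmA); [apply: IH | apply: (IMr HmA)].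
Qed.

Lemma Pc_diff n c c' e j : (0 < n)%N -> mA c -> ideal_pow mA n (c' - c) ->
  ideal_pow mA n.+1 ((Pc c' e)`_j - (Pc c e)`_j +
                     (if j.+1 == e then (c' - c) *+ e else 0)).
Proof.
move=> n0 Hc Hg.
have HM := ipow_ideal HmA n.+1.
have Hc' : mA c'.
  by rewrite -[c'](subrK c); apply: ID => //; apply: (ipow_mA HmA n0).
elim: e j => [|e IH] j.
  by rewrite /Pc !expr0 subrr add0r; apply: I0.
rewrite !Pc_rec.
set g := c' - c.
have T2 : ideal_pow mA n.+1 (- c * ((Pc c' e)`_j - (Pc c e)`_j +
                     (if j.+1 == e then g *+ e else 0))) by apply: IMl => //; apply: IH.
have T3 : ideal_pow mA n.+1 (c * (if j.+1 == e then g *+ e else 0)).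
  apply: ipow_mul => //; case: ifP => _; last exact: I0 (ipow_ideal HmA n).
  by apply: Imn => //; apply: ipow_ideal.
have T4 : ideal_pow mA n.+1 (- g * ((Pc c' e)`_j - (j == e)%:R)).
  by rewrite mulNr; apply: IN => //; apply: ipow_mulr => //; apply: Pc_mA.
case: j IH T2 T3 T4 => [|j] IH T2 T3 T4 /=.
  move: T2 T3 T4; case: e IH => [|e] IH /= T2 T3 T4.
    have -> : 0 - c' * (Pc c' 0)`_0 - (0 - c * (Pc c 0)`_0) + g *+ 1 =
      - c * ((Pc c' 0)`_0 - (Pc c 0)`_0 + 0) + - g * ((Pc c' 0)`_0 - 1).
      by rewrite /g; ring.
    by apply: (ID HM).
  have -> : 0 - c' * (Pc c' e.+1)`_0 - (0 - c * (Pc c e.+1)`_0) + 0 =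
      - c * ((Pc c' e.+1)`_0 - (Pc c e.+1)`_0 + (if 1%N == e.+1 then g *+ e.+1 else 0))
      + c * (if 1%N == e.+1 then g *+ e.+1 else 0) + - g * ((Pc c' e.+1)`_0 - 0).
    by rewrite /g; ring.
  by apply: (ID HM) => //; apply: (ID HM).
have T1 := IH j.
rewrite eqSS; move: T1 T4; case: (j.+1 == e) => T1 T4 /=.
  apply: (Iext' (ID HM (ID HM (ID HM T1 T2) T3) T4)); rewrite /g ?mulr1n; ring.
apply: (Iext' (ID HM (ID HM (ID HM T1 T2) T3) T4)); rewrite /g ?mulr0n; ring.
Qed.
End Coef.

Section Branch.
Variables (K : fieldType) (A : comAlgType K) (mA : A -> Prop).
Hypothesis HmA : is_ideal mA.

Definition peq (F : nat -> A) (a c : A) (e : nat) (G : nat -> A) :=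
  forall k, pssubC F a k = \sum_(j < k.+1) (Pc c e)`_j * G (k - j)%N.

Lemma G_mod e F (f : nat -> K) a c G : mA c -> mA a ->
  (forall k, mA (F k - (f k)%:A)) -> peq F a c e G ->
  forall j, mA (G j - (f (j + e)%N)%:A).
Proof.
move=> Hc Ha HF HG j.
set k := (j + e)%N.
have H1 : mA (\sum_(i < k.+1) (Pc c e)`_i * G (k - i)%N - (if (e < k.+1)%N then G j else 0)).
  apply: (sum_cong1 HmA) => i.
  have -> : (Pc c e)`_i * G (k - i)%N - (if (i : nat) == e then G j else 0) =
            ((Pc c e)`_i - ((i : nat) == e)%:R) * G (k - i)%N.
    case: eqP => [->|_]; last by rewrite mulr0n subr0 subr0.
    by rewrite /k addnK mulr1n mulrBl mul1r.
  by apply: (IMr HmA); apply: Pc_mA.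
rewrite ltnS leq_addl -HG /pssubC in H1.
have -> : G j - (f k)%:A = (F k - (f k)%:A) - (if k == 0%N then a else 0) -
   (F k - (if k == 0%N then a else 0) - G j) by ring.
apply: (IB HmA); last by [].
apply: (IB HmA) => //; case: ifP => _ //; exact: I0 HmA.
Qed.

Lemma branch_step n e F (f : nat -> K) a a' c c' G G' :
  (0 < n)%N -> mA c -> mA c' -> ideal_pow mA n (c' - c) ->
  (forall k, ideal_pow mA n (G k - G' k)) ->
  (forall k, mA (F k - (f k)%:A)) -> mA a' ->
  peq F a c e.+1 G -> peq F a' c' e.+1 G' ->
  forall k, ideal_pow mA n.+1
    ((if k == 0%N then a' - a else 0)
     - (if (e.+1 < k.+1)%N then G (k - e.+1)%N - G' (k - e.+1)%N else 0)
     - (if (e < k.+1)%N then (c' - c) *+ e.+1 * (f k.+1)%:A else 0)).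
Proof.
move=> n0 Hc Hc' Hg HD HF Ha' HG HG' k.
have HM := ipow_ideal HmA n.+1.
have Hn := ipow_ideal HmA n.
set g := c' - c.
have HG'm := G_mod Hc' Ha' HF HG'.
set S := \sum_(j < k.+1) (Pc c e.+1)`_j * G (k - j)%N.
set S' := \sum_(j < k.+1) (Pc c' e.+1)`_j * G' (k - j)%N.
have Hdiff : S - S' = if k == 0%N then a' - a else 0.
  rewrite /S /S' -HG -HG' /pssubC; case: ifP => _; ring.
set U := \sum_(j < k.+1) (Pc c e.+1)`_j * (G (k - j)%N - G' (k - j)%N).
set V := \sum_(j < k.+1) ((Pc c e.+1)`_j - (Pc c' e.+1)`_j) * G' (k - j)%N.
have HUV : S - S' = U + V.
  rewrite /S /S' /U /V -sumrB -big_split; apply: eq_bigr => j _ /=; ring.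
have HU : ideal_pow mA n.+1 (U - (if (e.+1 < k.+1)%N then G (k - e.+1)%N - G' (k - e.+1)%N else 0)).
  apply: (sum_cong1 HM) => j.
  have -> : (Pc c e.+1)`_j * (G (k - j)%N - G' (k - j)%N) -
     (if (j : nat) == e.+1 then G (k - e.+1)%N - G' (k - e.+1)%N else 0) =
     ((Pc c e.+1)`_j - ((j : nat) == e.+1)%:R) * (G (k - j)%N - G' (k - j)%N).
    case: eqP => [->|_]; last by rewrite mulr0n !subr0.
    by rewrite mulr1n mulrBl mul1r.
  by apply: ipow_mul => //; apply: Pc_mA.
have HV : ideal_pow mA n.+1 (V - (if (e < k.+1)%N then g *+ e.+1 * G' (k - e)%N else 0)).
  apply: (sum_cong1 HM) => j.
  have -> : ((Pc c e.+1)`_j - (Pc c' e.+1)`_j) * G' (k - j)%N -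
     (if (j : nat) == e then g *+ e.+1 * G' (k - e)%N else 0) =
     - (((Pc c' e.+1)`_j - (Pc c e.+1)`_j + (if (j : nat).+1 == e.+1 then g *+ e.+1 else 0))
       * G' (k - j)%N).
    rewrite eqSS; case: eqP => [->|_]; ring.
  by apply: (IN HM); apply: (IMr HM); apply: Pc_diff.
have HW : ideal_pow mA n.+1 (if (e < k.+1)%N then
     g *+ e.+1 * G' (k - e)%N - g *+ e.+1 * (f k.+1)%:A else 0).
  case: ifP => ek; last exact: (I0 HM).
  rewrite -mulrBr; apply: ipow_mulr => //; first by apply: (Imn Hn).
  have := HG'm (k - e)%N; rewrite addnS subnK //.
apply: (Iext' (ID HM (ID HM HU HV) HW)).
have E : U + V = (if k == 0%N then a' - a else 0) by rewrite -HUV Hdiff.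
rewrite -E; case: (e < k.+1)%N; ring.
Qed.

Lemma branch_facts n e F (f : nat -> K) a a' c c' G G' :
  (0 < n)%N -> mA c -> mA c' -> ideal_pow mA n (c' - c) ->
  (forall k, ideal_pow mA n (G k - G' k)) ->
  (forall k, mA (F k - (f k)%:A)) -> mA a' ->
  peq F a c e.+1 G -> peq F a' c' e.+1 G' ->
  [/\ ideal_pow mA n.+1 ((if e == 0%N then a' - a else 0) - (c' - c) *+ e.+1 * (f e.+1)%:A),
      ((0 < e)%N -> ideal_pow mA n.+1 (a' - a)) &
      (ideal_pow mA n.+1 (c' - c) -> forall j, ideal_pow mA n.+1 (G j - G' j))].
Proof.
move=> n0 Hc Hc' Hg HD HF Ha' HG HG'.
have HM := ipow_ideal HmA n.+1.
have B := branch_step n0 Hc Hc' Hg HD HF Ha' HG HG'.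
split.
- have := B e; rewrite ltnn leqnn.
  by case: (e == 0%N); move=> Hh; apply: (Iext' Hh); ring.
- move=> e0; have := B 0%N; rewrite eqxx !ltnS ltn0 leqn0 (gtn_eqF e0).
  by move=> Hh; apply: (Iext' Hh); ring.
- move=> Hgg j; set k := (j + e.+1)%N.
  have := B k.
  have h1 : (e.+1 < k.+1)%N by rewrite ltnS leq_addl.
  have h2 : (e < k.+1)%N by rewrite ltnS (leq_trans (leqnSn e)) // leq_addl.
  rewrite h1 h2 /k addnK addnS /= => H.
  have H2 : ideal_pow mA n.+1 ((c' - c) *+ e.+1 * (f (j + e).+2)%:A).
    by apply: (IMr HM); apply: (Imn HM).
  by apply: (Iext' (IN HM (ID HM H H2))); ring.
Qed.

Lemma cancel_scal (I : A -> Prop) (HI : is_ideal I) g m (f : K) :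
  (m%:R * f) != 0 -> I (g *+ m * f%:A) -> I g.
Proof.
move=> H Hg; apply: (Iinv HI H).
by rewrite -scalerA scaler_nat -mulr_algr -mulrnAl.
Qed.

Lemma algM (k1 k2 : K) : (k1 * k2)%:A = k1%:A * k2%:A :> A.
Proof. by rewrite mulr_algl scalerA. Qed.
Lemma algB (k1 k2 : K) : (k1 - k2)%:A = k1%:A - k2%:A :> A.
Proof. by rewrite scalerBl. Qed.
Lemma alg_scal (k : K) (u : A) : k *: u = k%:A * u.
Proof. by rewrite mulr_algl. Qed.
End Branch.

Unset Implicit Arguments.

Theorem lemma2p9 (K : closedFieldType) (r : nat)
  (f : bps K) (fi : 'I_r -> bps K) (x y : 'I_r -> nat -> K) (mlt : 'I_r -> nat)
  (Hcurve : param_of_curve f fi x y)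
  (Hmult : forall i, is_mult (x i) (y i) (mlt i))
  (Hsing : (1 < \sum_(i < r) mlt i)%N)
  (Hgood : good_char K mlt)
  (Hbranch : (forall i, (1 < mlt i)%N) \/ distinct_tangents x y mlt)
  (A : comAlgType K) (mA : A -> Prop) (HA : complete_local_K_alg mA)
  (X Y : 'I_r -> nat -> A) (Hlift : lifts mA x y X Y)
  (a b : A) (c : 'I_r -> A) (a' b' : A) (c' : 'I_r -> A)
  (Hs : equimult_sections mA mlt X Y a b c)
  (Hs' : equimult_sections mA mlt X Y a' b' c') :
  a = a' /\ b = b' /\ (forall i, c i = c' i).
Proof.
have HmA : is_ideal mA by case: HA => [[]].
have Sep : forall u, (forall n, ideal_pow mA n u) -> u = 0 by case: HA => _ [].
case: Hcurve => _ _ _ _ Hxy.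
have Hm1 : forall i, (0 < mlt i)%N.
  move=> i; case: (Hxy i) => x0 y0 _ _; case: (Hmult i) => _.
  rewrite lt0n => H; apply/eqP => H0; move: H; rewrite H0 x0 y0 eqxx; by case.
have Hnz : forall i, ((mlt i)%:R : K) != 0.
  move=> i; apply/negP => H; have [p Hp] := natf0_pchar (Hm1 i) H.
  by have := Hgood i p Hp; rewrite (dvdn_pcharf Hp) H.
case: Hs => Ha Hb Hc HX; case: Hs' => Ha' Hb' Hc' HX'.
have HlX : forall i k, mA (X i k - (x i k)%:A) by move=> i k; case: (Hlift i k).
have HlY : forall i k, mA (Y i k - (y i k)%:A) by move=> i k; case: (Hlift i k).
pose Q n := ideal_pow mA n (a' - a) /\ ideal_pow mA n (b' - b) /\
  forall i, ideal_pow mA n (c' i - c i) /\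
   (forall G G', peq (X i) a (c i) (mlt i) G -> peq (X i) a' (c' i) (mlt i) G' ->
       forall k, ideal_pow mA n (G k - G' k)) /\
   (forall G G', peq (Y i) b (c i) (mlt i) G -> peq (Y i) b' (c' i) (mlt i) G' ->
       forall k, ideal_pow mA n (G k - G' k)).
have Q1 : Q 1%N.
  split; first by apply: ipow1 => //; apply: (IB HmA).
  split; first by apply: ipow1 => //; apply: (IB HmA).
  move=> i; split; first by apply: ipow1 => //; apply: (IB HmA).
  split=> G G' HG HG' k; apply: ipow1 => //.
  - have H1 := G_mod HmA (Hc i) Ha (HlX i) HG k.
    have H2 := G_mod HmA (Hc' i) Ha' (HlX i) HG' k.
    by apply: (Iext' (IB HmA H1 H2)); ring.
  - have H1 := G_mod HmA (Hc i) Hb (HlY i) HG k.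
    have H2 := G_mod HmA (Hc' i) Hb' (HlY i) HG' k.
    by apply: (Iext' (IB HmA H1 H2)); ring.
have QS : forall n, Q n.+1 -> Q n.+2.
  move=> n [IHa [IHb IHi]].
  have n0 : (0 < n.+1)%N by [].
  have HM := ipow_ideal HmA n.+2.
  have key : forall i, exists e, [/\ mlt i = e.+1,
     ideal_pow mA n.+2 ((if e == 0%N then a' - a else 0) - (c' i - c i) *+ e.+1 * (x i e.+1)%:A),
     ideal_pow mA n.+2 ((if e == 0%N then b' - b else 0) - (c' i - c i) *+ e.+1 * (y i e.+1)%:A),
     ((0 < e)%N -> ideal_pow mA n.+2 (a' - a) /\ ideal_pow mA n.+2 (b' - b)) &
     (ideal_pow mA n.+2 (c' i - c i) ->
        (forall G G', peq (X i) a (c i) (mlt i) G -> peq (X i) a' (c' i) (mlt i) G' ->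
           forall k, ideal_pow mA n.+2 (G k - G' k)) /\
        (forall G G', peq (Y i) b (c i) (mlt i) G -> peq (Y i) b' (c' i) (mlt i) G' ->
           forall k, ideal_pow mA n.+2 (G k - G' k)))].
    move=> i; exists (mlt i).-1.
    have Hmi : mlt i = (mlt i).-1.+1 by rewrite prednK.
    have [IHg [IHX IHY]] := IHi i.
    have [[GX HGX] [GY HGY]] := HX i.
    have [[GX' HGX'] [GY' HGY']] := HX' i.
    have FX : forall G G', peq (X i) a (c i) (mlt i) G -> peq (X i) a' (c' i) (mlt i) G' -> _
      := fun G G' HG HG' =>
       branch_facts HmA n0 (Hc i) (Hc' i) IHg (IHX G G' HG HG') (HlX i) Ha'
         (eq_ind _ (fun m => peq (X i) a (c i) m G) HG _ Hmi)
         (eq_ind _ (fun m => peq (X i) a' (c' i) m G') HG' _ Hmi).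
    have FY : forall G G', peq (Y i) b (c i) (mlt i) G -> peq (Y i) b' (c' i) (mlt i) G' -> _
      := fun G G' HG HG' =>
       branch_facts HmA n0 (Hc i) (Hc' i) IHg (IHY G G' HG HG') (HlY i) Hb'
         (eq_ind _ (fun m => peq (Y i) b (c i) m G) HG _ Hmi)
         (eq_ind _ (fun m => peq (Y i) b' (c' i) m G') HG' _ Hmi).
    have [X1 X2 X3] := FX _ _ HGX HGX'.
    have [Y1 Y2 Y3] := FY _ _ HGY HGY'.
    split => //.
    - by move=> e0; split; [apply: X2 | apply: Y2].
    - move=> Hg; split => G G' HG HG'.
      + by have [_ _ Z] := FX _ _ HG HG'; apply: Z.
      + by have [_ _ Z] := FY _ _ HG HG'; apply: Z.
  have Hab : ideal_pow mA n.+2 (a' - a) /\ ideal_pow mA n.+2 (b' - b).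
    case: (pickP (fun i => (1 < mlt i)%N)) => [i Hi | Hno].
      have [e [Hmi _ _ H _]] := key i; apply: H.
      by rewrite Hmi ltnS in Hi.
    have H1 : forall i, mlt i = 1%N.
      move=> i; apply/eqP; rewrite eqn_leq (Hm1 i) andbT leqNgt.
      by have := Hno i => /= ->.
    have Hr : (1 < r)%N.
      move: Hsing; rewrite (eq_bigr (fun _ => 1%N)); last by move=> i _; exact: H1.
      by rewrite sum_nat_const card_ord muln1.
    pose i0 : 'I_r := Ordinal (ltnW Hr).
    pose i1 : 'I_r := Ordinal Hr.
    have Hdt : distinct_tangents x y mlt.
      by case: Hbranch => // H; move: (H i0); rewrite H1.
    have D := Hdt i0 i1 isT.
    rewrite !H1 in D.
    have [e0 [Hm0 A0 B0 _ _]] := key i0.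
    have [e1 [Hm1' A1 B1 _ _]] := key i1.
    rewrite H1 in Hm0; rewrite H1 in Hm1'.
    case: Hm0 => Hm0; case: Hm1' => Hm1'; subst e0 e1.
    rewrite eqxx in A0 B0 A1 B1.
    have E0 : ideal_pow mA n.+2 ((a' - a) * (y i0 1%N)%:A - (b' - b) * (x i0 1%N)%:A).
      by apply: (Iext' (IB HM (IMr HM (y i0 1%N)%:A A0) (IMr HM (x i0 1%N)%:A B0))); ring.
    have E1 : ideal_pow mA n.+2 ((a' - a) * (y i1 1%N)%:A - (b' - b) * (x i1 1%N)%:A).
      by apply: (Iext' (IB HM (IMr HM (y i1 1%N)%:A A1) (IMr HM (x i1 1%N)%:A B1))); ring.
    split; apply: (Iinv HM D); rewrite alg_scal algB !algM.
      by apply: (Iext' (IB HM (IMl HM (x i0 1%N)%:A E1) (IMl HM (x i1 1%N)%:A E0))); ring.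
    by apply: (Iext' (IB HM (IMl HM (y i0 1%N)%:A E1) (IMl HM (y i1 1%N)%:A E0))); ring.
  have Hg : forall i, ideal_pow mA n.+2 (c' i - c i).
    move=> i; have [e [Hmi Ai Bi _ _]] := key i.
    have Hn' := Hnz i; rewrite Hmi in Hn'.
    have [Ta Tb] : ideal_pow mA n.+2 (if e == 0%N then a' - a else 0) /\ ideal_pow mA n.+2 (if e == 0%N then b' - b else 0).
      by case: Hab => Ha2 Hb2; case: (e == 0%N); split => //; apply: (I0 HM).
    case: (Hmult i) => _; rewrite Hmi => -[Hx|Hy].
      apply: (cancel_scal HM (m:=e.+1) (f:=x i e.+1)); first by rewrite mulf_neq0.
      by apply: (Iext' (IB HM Ta Ai)); ring.
    apply: (cancel_scal HM (m:=e.+1) (f:=y i e.+1)); first by rewrite mulf_neq0.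
    by apply: (Iext' (IB HM Tb Bi)); ring.
  split; first by case: Hab.
  split; first by case: Hab.
  move=> i; split; first exact: Hg.
  by have [e [_ _ _ _ H]] := key i; apply: H; apply: Hg.
have Qall : forall n, Q n.+1 by elim => [|n IH] //; apply: QS.
have All : forall u, (forall n, ideal_pow mA n.+1 u) -> u = 0.
  by move=> u H; apply: Sep; case => [|n] //; apply: H.
split; [|split].
- by symmetry; apply: subr0_eq; apply: All => n; case: (Qall n).
- by symmetry; apply: subr0_eq; apply: All => n; case: (Qall n) => _ [].
- move=> i; symmetry; apply: subr0_eq; apply: All => n.
  by have [_ [_ H]] := Qall n; case: (H i).
Qed.
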